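(* Let $B,W,T$ be positive integers with $W\ge B+1$ and let $T_{\mathrm{eff}}=\min(W-1,T)$. For the channel $\mathcal{C}(N=1,B,W)$ there exists a streaming code with delay $T$ and rate \[ R=\begin{cases}\frac{T_{\mathrm{eff}}}{T_{\mathrm{eff}}+B}, & T_{\mathrm{eff}}\ge B,\\ 0, & \text{else}.\end{cases} \]
   Context: Channel $\mathcal{C}(N,B,W)$: a packet erasure channel on channel uses $i=0,1,2,\dots$ such that in every sliding window of $W$ consecutive channel uses the erased positions form either a single burst of length at most $B$ or at most $N$ arbitrary erasures (for $N=1$: at most one burst of length at most $B$ per window). Streaming code: at time $i$ the encoder observes $\mathbf{s}[i]\in\mathbb{F}_q^k$ and transmits $\mathbf{x}[i]=f_i(\mathbf{s}[0],\dots,\mathbf{s}[i])\in\mathbb{F}_q^n$; outputs are $\mathbf{y}[i]\in\{\mathbf{x}[i],\star\}$. Delay $T$ means $\mathbf{s}[i]=g_i(\mathbf{y}[0],\dots,\mathbf{y}[i+T])$ for all $i$, all sources and all admissible erasure patterns. Rate $R=k/n$. *)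

(* Defs.v *)
From HB Require Import structures.
From mathcomp Require Import all_boot all_order all_algebra.
Set Implicit Arguments. Unset Strict Implicit. Unset Printing Implicit Defensive.
Import Order.TTheory GRing.Theory Num.Theory.

(* Erasure pattern: e i = true iff channel use i is erased. *)
Definition erasure_pattern := nat -> bool.

Definition admissible_C1 (B W : nat) (e : erasure_pattern) : Prop :=
  forall t : nat, exists a l : nat,
    l <= B /\ forall i, t <= i < t + W -> e i = (a <= i < a + l).

Definition causal_encoder (F : Type) (k n : nat)
    (enc : nat -> (nat -> 'rV[F]_k) -> 'rV[F]_n) : Prop :=
  forall i (s s' : nat -> 'rV[F]_k),
    (forall j, j <= i -> s j = s' j) -> enc i s = enc i s'.

(* Decoder dec i outputs an estimate of s[i] and depends only on
   y[0..i+T]; None stands for an erasure (the symbol \star). *)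
Definition delay_decoder (F : Type) (k n T : nat)
    (dec : nat -> (nat -> option 'rV[F]_n) -> 'rV[F]_k) : Prop :=
  forall i (y y' : nat -> option 'rV[F]_n),
    (forall j, j <= i + T -> y j = y' j) -> dec i y = dec i y'.

Definition channel_output (F : Type) (k n : nat)
    (enc : nat -> (nat -> 'rV[F]_k) -> 'rV[F]_n) (s : nat -> 'rV[F]_k)
    (e : erasure_pattern) : nat -> option 'rV[F]_n :=
  fun j => if e j then None else Some (enc j s).

Definition streaming_code_exists_C1 (F : Type) (k n B W T : nat) : Prop :=
  exists (enc : nat -> (nat -> 'rV[F]_k) -> 'rV[F]_n)
         (dec : nat -> (nat -> option 'rV[F]_n) -> 'rV[F]_k),
    causal_encoder enc /\ delay_decoder T dec /\
    forall (s : nat -> 'rV[F]_k) (e : erasure_pattern),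
      admissible_C1 B W e ->
      forall i, dec i (channel_output enc s e) = s i.

Definition Teff (W T : nat) : nat := minn (W - 1) T.

Definition rate_C1 (B W T : nat) : rat :=
  if B <= Teff W T then ((Teff W T)%:R / (Teff W T + B)%:R)%R else 0%R.

(* Main.v *)
Require Import Defs.
From HB Require Import structures.
From mathcomp Require Import all_boot all_order all_algebra.
Import Order.TTheory GRing.Theory Num.Theory.
From mathcomp Require Import zify ring.
From Stdlib Require Import ClassicalEpsilon FunctionalExtensionality PropExtensionality.
Set Implicit Arguments. Unset Strict Implicit. Unset Printing Implicit Defensive.

Open Scope ring_scope.
Definition nw (F : fieldType) (al : nat -> F) (l j : nat) : F :=
  \prod_(m < l) (al j - al m).

Lemma nw_gt (F : fieldType) (al : nat -> F) l j : (j < l)%N -> nw al l j = 0.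
Proof.
move=> jl; rewrite /nw (bigD1 (Ordinal jl)) //= subrr mul0r //.
Qed.

Lemma nw_neq0 (F : fieldType) (al : nat -> F) D l :
  (forall j j', (j < D)%N -> (j' < D)%N -> al j = al j' -> j = j') ->
  (l < D)%N -> nw al l l != 0.
Proof.
move=> inj lD; rewrite /nw; apply/prodf_neq0 => m _.
rewrite subr_eq0; apply/negP => /eqP E.
have := inj l m lD (ltn_trans (ltn_ord m) lD) E.
move: (ltn_ord m); lia.
Qed.

Lemma cw_zero (F : fieldType) (al : nat -> F) (D K : nat) (a : nat -> F) (x y : nat) :
  (forall j j', (j < D)%N -> (j' < D)%N -> al j = al j' -> j = j') ->
  (K <= D)%N -> (x <= K)%N -> (x <= y)%N -> (y + (K - x) <= D)%N ->
  (forall j, ((j < x) || (y <= j < y + (K - x)))%N ->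
     \sum_(l < K) a l * nw al l j = 0) ->
  forall l, (l < K)%N -> a l = 0.
Proof.
move=> inj KD xK xy yD Hz.
pose p : {poly F} := \sum_(l < K) a l *: \prod_(m < l) ('X - (al m)%:P).
have hp j : p.[al j] = \sum_(l < K) a l * nw al l j.
  rewrite /p horner_sum; apply: eq_bigr => l _.
  by rewrite hornerZ horner_prod; congr (_ * _); apply: eq_bigr => m _; rewrite hornerXsubC.
have p0 : p = 0.
  pose rs := map al (iota 0 x ++ iota y (K - x)).
  apply: (@roots_geq_poly_eq0 _ p rs).
  - apply/allP => z /mapP [j]; rewrite mem_cat !mem_iota => Hj ->.
    by rewrite /root hp Hz //; move: Hj; rewrite !add0n.
  - rewrite map_inj_in_uniq.
      rewrite cat_uniq !iota_uniq /= andbT; apply/hasPn => j; rewrite !mem_iota => Hj.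
      apply/negP; move: Hj; lia.
    move=> j j'; rewrite !mem_cat !mem_iota => Hj Hj' /inj; apply; lia.
  - rewrite size_map size_cat !size_iota.
    apply: leq_trans (size_sum _ _ _) _.
    apply/bigmax_leqP => l _.
    apply: leq_trans (size_scale_leq _ _) _.
    rewrite size_prod_XsubC [index_enum _]unlock -enumT size_enum_ord; move: (ltn_ord l); lia.
have Hall j : \sum_(l < K) a l * nw al l j = 0 by rewrite -hp p0 horner0.
elim/ltn_ind => l IH lK.
have := Hall l; rewrite (bigD1 (Ordinal lK)) //= big1.
  have nz := nw_neq0 inj (leq_trans lK KD).
  by rewrite addr0 => /eqP; rewrite mulf_eq0 (negbTE nz) orbF => /eqP.
move=> m /eqP Hm; have [ml|lm] := ltnP m l.
  by rewrite IH ?mul0r.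
rewrite nw_gt ?mulr0 //; have : (m : nat) <> l by move=> E; apply: Hm; apply: val_inj.
lia.
Qed.

Close Scope ring_scope.

Definition rho (F : fieldType) (D : nat) (sg : nat -> nat -> F) (tau j : nat) : F :=
  if (D <= tau)%N then sg (tau - D)%N j else 0%R.

Definition Ev (F : fieldType) (al : nat -> F) (B K : nat) (sg : nat -> nat -> F) (c j : nat) : F :=
  (\sum_(l < K) rho (B + K) sg (c + l) (B + l) * nw al l j)%R.

Definition Ent (F : fieldType) (al : nat -> F) (B K : nat) (sg : nat -> nat -> F) (t j : nat) : F :=
  if (j < B)%N then sg t j
  else if (j < B + K)%N then Ev al B K sg (t + (B + K) - (j - B)) (j - B)
  else (rho (B + K) sg t (j - (B + K)) +
       Ev al B K sg (t + (B + K) - (K + (j - (B + K)))) (K + (j - (B + K))))%R.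

Lemma rho_lin (F : fieldType) D (s1 s2 : nat -> nat -> F) tau j :
  rho D (fun t j => (s1 t j - s2 t j)%R) tau j = (rho D s1 tau j - rho D s2 tau j)%R.
Proof. by rewrite /rho; case: ifP => //; rewrite subr0. Qed.

Lemma Ev_lin (F : fieldType) al B K (s1 s2 : nat -> nat -> F) c j :
  Ev al B K (fun t j => (s1 t j - s2 t j)%R) c j = (Ev al B K s1 c j - Ev al B K s2 c j)%R.
Proof.
by rewrite /Ev -sumrB; apply: eq_bigr => l _; rewrite rho_lin mulrBl.
Qed.

Lemma Ent_lin (F : fieldType) al B K (s1 s2 : nat -> nat -> F) t j :
  Ent al B K (fun t j => (s1 t j - s2 t j)%R) t j = (Ent al B K s1 t j - Ent al B K s2 t j)%R.
Proof.
rewrite /Ent; case: ifP => // _; case: ifP => _; first exact: Ev_lin.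
rewrite rho_lin Ev_lin; ring.
Qed.

Lemma Ev_causal (F : fieldType) al B K (s1 s2 : nat -> nat -> F) t c j :
  (forall tau j, (tau <= t)%N -> s1 tau j = s2 tau j) ->
  (c + j <= t + (B + K))%N -> Ev al B K s1 c j = Ev al B K s2 c j.
Proof.
move=> H cj; apply: eq_bigr => l _.
have [lj|jl] := leqP l j.
  by rewrite /rho; case: ifP => // h; rewrite H //; lia.
by rewrite nw_gt // !mulr0.
Qed.

Lemma Ent_causal (F : fieldType) al B K (s1 s2 : nat -> nat -> F) t j :
  (forall tau j, (tau <= t)%N -> s1 tau j = s2 tau j) -> (j < B + K + B)%N ->
  Ent al B K s1 t j = Ent al B K s2 t j.
Proof.
move=> H jn; rewrite /Ent; case: ifP => h1; first by rewrite H.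
case: ifP => h2.
  by apply: Ev_causal H _; lia.
congr (_ + _)%R.
  by rewrite /rho; case: ifP => // h; rewrite H //; lia.
by apply: Ev_causal H _; lia.
Qed.

Section Dec.
End Dec.

Lemma Ev_past (F : fieldType) al B K (dl : nat -> nat -> F) i c j :
  (forall tau j, (tau < i)%N -> dl tau j = 0%R) ->
  (c + j < i + (B + K))%N -> Ev al B K dl c j = 0%R.
Proof.
move=> Hp cj; apply: big1 => l _.
have [lj|jl] := leqP l j.
  by rewrite /rho; case: ifP => h; rewrite ?mul0r // Hp ?mul0r //; lia.
by rewrite nw_gt // mulr0.
Qed.

Lemma Ev_recv (F : fieldType) al B K (dl : nat -> nat -> F) i c j :
  (forall tau j, (tau < i)%N -> dl tau j = 0%R) ->
  (j < B + K)%N -> (B + K <= c + j)%N -> (c + j < i + (B + K) + (B + K))%N ->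
  (forall j', (j' < B + K + B)%N -> Ent al B K dl (c + j - (B + K)) j' = 0%R) ->
  Ev al B K dl c j = 0%R.
Proof.
move=> Hp jD cD ci Hr.
have [jK|Kj] := ltnP j K.
  have := Hr (B + j) ltac:(lia); rewrite /Ent.
  case: ifP => h1; first lia.
  case: ifP => h2; last lia.
  have -> : (c + j - (B + K) + (B + K) - (B + j - B) = c)%N by lia.
  by have -> : (B + j - B = j)%N by lia.
have := Hr (B + j) ltac:(lia); rewrite /Ent.
case: ifP => h1; first lia.
case: ifP => h2; first lia.
have -> : (c + j - (B + K) + (B + K) - (K + (B + j - (B + K))) = c)%N by lia.
have -> : (K + (B + j - (B + K)) = j)%N by lia.
rewrite {1}/rho; case: ifP => h3; last by rewrite add0r.
by rewrite Hp ?add0r //; lia.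
Qed.

Lemma v_zero (F : fieldType) (al : nat -> F) B K (dl : nat -> nat -> F) i l' z :
  (forall j j', (j < B + K)%N -> (j' < B + K)%N -> al j = al j' -> j = j') ->
  (forall tau j, (tau < i)%N -> dl tau j = 0%R) ->
  (l' < K)%N -> (i <= z)%N ->
  (forall t, (i <= t < i + (B + K))%N -> ~~ (z <= t < z + B)%N ->
     forall j', (j' < B + K + B)%N -> Ent al B K dl t j' = 0%R) ->
  dl i (B + l') = 0%R.
Proof.
move=> inj Hp lK iz Hr.
pose c := (i + (B + K) - l')%N.
have := @cw_zero F al (B + K) K (fun l => rho (B + K) dl (c + l) (B + l))
  (minn (z - i + l') K) (minn (z - i + l') K + B) inj.
move=> /(_ ltac:(lia) ltac:(lia) ltac:(lia) ltac:(lia)) H.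
have HZ : forall j, ((j < minn (z - i + l') K) ||
    (minn (z - i + l') K + B <= j < minn (z - i + l') K + B + (K - minn (z - i + l') K)))%N ->
    Ev al B K dl c j = 0%R.
  move=> j Hj.
  have [jl|lj] := ltnP j l'.
    by apply: (@Ev_past F al B K dl i c j Hp); rewrite /c; lia.
  apply: (@Ev_recv F al B K dl i c j Hp); rewrite /c; try lia.
  move=> j' Hj'; apply: Hr => //; lia.
have := H HZ l' lK.
rewrite /rho; case: ifP => h; last lia.
by have -> : (c + l' - (B + K) = i)%N by rewrite /c; lia.
Qed.

Lemma u_zero (F : fieldType) (al : nat -> F) B K (dl : nat -> nat -> F) i r m :
  (forall j j', (j < B + K)%N -> (j' < B + K)%N -> al j = al j' -> j = j') ->
  (forall tau j, (tau < i)%N -> dl tau j = 0%R) ->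
  (r < B)%N -> (m <= B)%N ->
  (forall t, (i + m <= t <= i + (B + K))%N ->
     forall j', (j' < B + K + B)%N -> Ent al B K dl t j' = 0%R) ->
  dl i r = 0%R.
Proof.
move=> inj Hp rB mB Hr.
pose c := (i + (B + K) + (B + K) - (K + r))%N.
have HZ : forall j, ((j < 0) || (r <= j < r + (K - 0)))%N -> Ev al B K dl c j = 0%R.
  move=> j Hj.
  apply: (@Ev_recv F al B K dl i c j Hp); rewrite /c; try lia.
  move=> j' Hj'; apply: Hr => //; lia.
have := @cw_zero F al (B + K) K (fun l => rho (B + K) dl (c + l) (B + l)) 0 r inj.
move=> /(_ ltac:(lia) ltac:(lia) ltac:(lia) ltac:(lia) HZ) Ha.
have Ec : Ev al B K dl c (K + r) = 0%R.
  by apply: big1 => l _; rewrite Ha ?mul0r.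
have := Hr (i + (B + K))%N ltac:(lia) (B + K + r)%N ltac:(lia).
rewrite /Ent; case: ifP => h1; first lia.
case: ifP => h2; first lia.
have -> : (B + K + r - (B + K) = r)%N by lia.
have -> : (i + (B + K) + (B + K) - (K + r) = c)%N by [].
rewrite Ec addr0 /rho; case: ifP => h; last lia.
by have -> : (i + (B + K) - (B + K) = i)%N by lia.
Qed.

Lemma core (F : fieldType) (al : nat -> F) B K (dl : nat -> nat -> F) i a l :
  (forall j j', (j < B + K)%N -> (j' < B + K)%N -> al j = al j' -> j = j') ->
  (forall tau j, (tau < i)%N -> dl tau j = 0%R) ->
  (l <= B)%N ->
  (forall t, (i <= t <= i + (B + K))%N -> ~~ (a <= t < a + l)%N ->
     forall j', (j' < B + K + B)%N -> Ent al B K dl t j' = 0%R) ->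
  forall j, (j < B + K)%N -> dl i j = 0%R.
Proof.
move=> inj Hp lB Hr j jD.
have [jB|Bj] := ltnP j B; last first.
  have -> : j = (B + (j - B))%N by lia.
  apply: (@v_zero F al B K dl i (j - B) (maxn a i) inj Hp); try lia.
  move=> t Ht Hz j' Hj'; apply: Hr => //; lia.
have [Hi|Hi] := boolP (a <= i < a + l)%N.
  apply: (@u_zero F al B K dl i j (a + l - i) inj Hp) => //; try lia.
  move=> t Ht j' Hj'; apply: Hr => //; lia.
have := Hr i ltac:(lia) Hi j ltac:(lia).
by rewrite /Ent jB.
Qed.

Definition sget (F : fieldType) (k : nat) (x : 'rV[F]_k) (j : nat) : F :=
  match @insub nat (fun j => (j < k)%N) 'I_k j with Some o => x ord0 o | None => 0%R end.

Lemma sget_ord (F : fieldType) k (x : 'rV[F]_k) (o : 'I_k) : sget x o = x ord0 o.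
Proof.
rewrite /sget; case: insubP => [o' _ E|]; last by rewrite ltn_ord.
by congr (x ord0 _); apply: val_inj.
Qed.

Lemma sget_out (F : fieldType) k (x : 'rV[F]_k) j : (k <= j)%N -> sget x j = 0%R.
Proof. by move=> kj; rewrite /sget insubN // -leqNgt. Qed.

Definition sig (F : fieldType) k (s : nat -> 'rV[F]_k) (t j : nat) : F := sget (s t) j.

Definition encF (F : fieldType) (al : nat -> F) B K
  (t : nat) (s : nat -> 'rV[F]_(B + K)) : 'rV[F]_(B + K + B) :=
  \row_(j < B + K + B) Ent al B K (sig s) t j.

Arguments encF {F} al B K t s.

Lemma encF_causal (F : fieldType) (al : nat -> F) B K : causal_encoder (encF al B K).
Proof.
move=> t s s' H; apply/rowP => j; rewrite !mxE.
apply: Ent_causal (ltn_ord j) => tau j' ht.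
by rewrite /sig H.
Qed.

Lemma uniq_dec (F : fieldType) (al : nat -> F) B K W (e : erasure_pattern)
    (s s' : nat -> 'rV[F]_(B + K)) i :
  (forall j j', (j < B + K)%N -> (j' < B + K)%N -> al j = al j' -> j = j') ->
  admissible_C1 B W e -> (B + K < W)%N ->
  (forall t, (t <= i + (B + K))%N -> e t = false -> encF al B K t s = encF al B K t s') ->
  s i = s' i.
Proof.
move=> inj adm DW Hag.
pose dl := fun t j => (sig s t j - sig s' t j)%R.
have claim : forall i0, (i0 <= i)%N -> forall j, dl i0 j = 0%R.
  elim/ltn_ind => i0 IH i0i j.
  have [jD|Dj] := ltnP j (B + K); last first.
    by rewrite /dl /sig !sget_out // subrr.
  have [a [l [lB Hw]]] := adm i0.
  apply: (@core F al B K dl i0 a l inj) => //.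
    move=> tau j' ht; apply: IH => //; lia.
  move=> t Ht Hn j' Hj'.
  have et : e t = false by rewrite Hw ?(negbTE Hn) //; lia.
  have := congr1 (fun M : 'rV[F]_(B + K + B) => M ord0 (Ordinal Hj')) (Hag t ltac:(lia) et).
  rewrite /= !mxE => Eq.
  by rewrite /dl Ent_lin Eq subrr.
apply/rowP => o; have := claim i (leqnn i) o.
by rewrite /dl /sig !sget_ord => /eqP; rewrite subr_eq0 => /eqP.
Qed.

Definition Pdec (F : fieldType) (al : nat -> F) B K T i
   (y : nat -> option 'rV[F]_(B + K + B)) (s : nat -> 'rV[F]_(B + K)) : Prop :=
  forall t, (t <= i + T)%N -> forall z, y t = Some z -> z = encF al B K t s.

Arguments Pdec {F} al B K T i y s.

Lemma inh_src (F : fieldType) k : inhabited (nat -> 'rV[F]_k).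
Proof. exact: inhabits (fun _ => 0%R). Qed.

Definition decF (F : fieldType) (al : nat -> F) B K T i
   (y : nat -> option 'rV[F]_(B + K + B)) : 'rV[F]_(B + K) :=
  epsilon (@inh_src F (B + K)) (Pdec al B K T i y) i.

Arguments decF {F} al B K T i y.

Lemma code_exists (F : fieldType) (al : nat -> F) B K W T :
  (forall j j', (j < B + K)%N -> (j' < B + K)%N -> al j = al j' -> j = j') ->
  (B + K <= T)%N -> (B + K < W)%N ->
  streaming_code_exists_C1 F (B + K) (B + K + B) B W T.
Proof.
move=> inj DT DW.
exists (encF al B K), (decF al B K T); split; first exact: encF_causal.
split.
  move=> i y y' Hyy; rewrite /decF.
  have -> : Pdec al B K T i y = Pdec al B K T i y'; last by [].
  apply: functional_extensionality => s; apply: propositional_extensionality.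
  by split => H t ht z; [rewrite -Hyy // | rewrite Hyy //]; apply: H.
move=> s e adm i.
set y := channel_output _ s e.
have hs : Pdec al B K T i y s.
  by move=> t ht z; rewrite /y /channel_output; case: (e t) => // -[].
have := epsilon_spec (@inh_src F (B + K)) (Pdec al B K T i y) (ex_intro _ s hs).
rewrite /decF; set s' := epsilon _ _ => Hs'.
symmetry; apply: (uniq_dec inj adm DW) => t ht et.
by apply: Hs'; [lia | rewrite /y /channel_output et].
Qed.

Unset Implicit Arguments.

Theorem proposition1 (B W T : nat) :
  0 < B -> 0 < W -> 0 < T -> B + 1 <= W ->
  exists (F : finFieldType) (k n : nat),
    0 < n /\ (k%:R / n%:R = rate_C1 B W T :> rat)%R /\
    streaming_code_exists_C1 F k n B W T.
Proof.
move=> B0 W0 T0 BW.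
rewrite /rate_C1; case: (leqP B (Teff W T)) => hB.
  have [p Tp pp] := prime_above (Teff W T).
  exists ('F_p : finFieldType), (B + (Teff W T - B)), (B + (Teff W T - B) + B).
  split; first lia.
  split; first by rewrite subnKC.
  apply: (@code_exists _ (fun j => (j%:R : 'F_p)%R)).
  - move=> j j' hj hj' E.
    have := congr1 (fun x : 'F_p => nat_of_ord x) E; rewrite /= !(val_Fp_nat pp) !modn_small //; lia.
  - rewrite /Teff in hB Tp *; lia.
  - rewrite /Teff in hB Tp *; lia.
exists ('F_2 : finFieldType), 0, 1.
split => //; split; first by rewrite mul0r.
exists (fun _ _ => 0%R), (fun _ _ => 0%R); split; first by [].
split; first by [].
by move=> s e _ i; rewrite [s i]thinmx0.
Qed.
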